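(* Let $E>0$ and let $(H_0,h)$ be one of (a) $H_0=E(\sigma_z\otimes I_2\otimes I_2+I_2\otimes\sigma_z\otimes I_2+I_2\otimes I_2\otimes\sigma_z)$, $h=E\sigma_z$; (b) $H_0=E\sum_{k=1}^3(\sigma_x^{(k)}+\sigma_y^{(k)})$, $h=E(\sigma_x+\sigma_y)$, where $\sigma^{(k)}$ denotes $\sigma$ acting on qubit $k$ and identity elsewhere. Set $H_A=H_B=H_C=h$. Let $H_{\mathrm{int}}$ be any Hermitian operator on $(\mathbb{C}^2)^{\otimes3}$ and $H=H_0+H_{\mathrm{int}}$. For any three-qubit density matrix $\varrho$ with single-qubit reduced states $\varrho_A,\varrho_B,\varrho_C$, if $\mathcal{C}(\varrho;H)\ge\mathcal{C}(\varrho;H_0)$ then $$\mathcal{C}(\varrho_A;H_A)+\mathcal{C}(\varrho_B;H_B)+\mathcal{C}(\varrho_C;H_C)\le\mathcal{C}(\varrho;H).$$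
   Context: Quantum battery capacity: for Hermitian $H$ on $\mathbb{C}^d$ with eigenvalues $\epsilon_0\le\dots\le\epsilon_{d-1}$ and density matrix $\rho$ with eigenvalues $\lambda_0\le\dots\le\lambda_{d-1}$, $\mathcal{C}(\rho;H)=\sum_i\epsilon_i(\lambda_i-\lambda_{d-1-i})$. $\sigma_x,\sigma_y,\sigma_z$ are the Pauli matrices. *)

(* Defs.v *)
From HB Require Import structures.
From mathcomp Require Import all_boot all_order all_algebra.
From mathcomp Require Import mxtens.
Set Implicit Arguments. Unset Strict Implicit. Unset Printing Implicit Defensive.
Import Order.TTheory GRing.Theory Num.Theory Num.Def.
Local Open Scope ring_scope.

Section Defs.
Variable C : numClosedFieldType.

(* eigenvalues (with multiplicity) of a square matrix, sorted increasingly;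
   spectral_diag is MathComp's spectral decomposition A = P^-1 diag(d) P
   (P unitary), valid for normal, in particular Hermitian, matrices *)
Definition eigs n (A : 'M[C]_n) : seq C :=
  sort <=%R [seq spectral_diag A 0 i | i <- enum 'I_n].

Definition capacity n (rho H : 'M[C]_n) : C :=
  \sum_(i < n) nth 0 (eigs H) i *
                 (nth 0 (eigs rho) i - nth 0 (eigs rho) (n - 1 - i)%N).

Definition psdmx n (A : 'M[C]_n) : Prop :=
  A \is hermsymmx /\ forall v : 'rV[C]_n, 0 <= (v *m A *m (map_mx conjC v)^T) 0 0.

Definition density n (rho : 'M[C]_n) : Prop := psdmx rho /\ \tr rho = 1.

(* 2x2 matrix [[a, b], [c, d]] (row index 0 = |0>) *)
Definition mx2 (a b c d : C) : 'M[C]_2 :=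
  \matrix_(i < 2, j < 2)
     nth 0 (nth [::] [:: [:: a; b]; [:: c; d]] i) j.

Definition sigma_x : 'M[C]_2 := mx2 0 1 1 0.
Definition sigma_y : 'M[C]_2 := mx2 0 (- 'i) 'i 0.
Definition sigma_z : 'M[C]_2 := mx2 1 0 0 (-1).
Definition I2 : 'M[C]_2 := 1%:M.

(* three qubits A B C: (C^2 ⊗ C^2) ⊗ C^2, Kronecker product *t from mxtens *)
Definition on1 (s : 'M[C]_2) : 'M[C]_(2 * 2 * 2) := s *t I2 *t I2.
Definition on2 (s : 'M[C]_2) : 'M[C]_(2 * 2 * 2) := I2 *t s *t I2.
Definition on3 (s : 'M[C]_2) : 'M[C]_(2 * 2 * 2) := I2 *t I2 *t s.

(* basis index |a b c> consistent with the ordering of *t *)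
Definition idx3 (a b c : 'I_2) : 'I_(2 * 2 * 2) :=
  mxtens_index (mxtens_index (a, b), c).

Definition ptrA (rho : 'M[C]_(2 * 2 * 2)) : 'M[C]_2 :=
  \matrix_(i, j) \sum_(b < 2) \sum_(c < 2) rho (idx3 i b c) (idx3 j b c).
Definition ptrB (rho : 'M[C]_(2 * 2 * 2)) : 'M[C]_2 :=
  \matrix_(i, j) \sum_(a < 2) \sum_(c < 2) rho (idx3 a i c) (idx3 a j c).
Definition ptrC (rho : 'M[C]_(2 * 2 * 2)) : 'M[C]_2 :=
  \matrix_(i, j) \sum_(a < 2) \sum_(b < 2) rho (idx3 a b i) (idx3 a b j).

Definition H0a (E : C) : 'M[C]_(2 * 2 * 2) :=
  E *: (on1 sigma_z + on2 sigma_z + on3 sigma_z).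
Definition ha (E : C) : 'M[C]_2 := E *: sigma_z.
Definition H0b (E : C) : 'M[C]_(2 * 2 * 2) :=
  E *: ((on1 sigma_x + on1 sigma_y) + (on2 sigma_x + on2 sigma_y)
        + (on3 sigma_x + on3 sigma_y)).
Definition hb (E : C) : 'M[C]_2 := E *: (sigma_x + sigma_y).

End Defs.

(* Main.v *)
Require Import Defs.
From HB Require Import structures.
From mathcomp Require Import all_boot all_order all_algebra all_fingroup.
From mathcomp Require Import mxtens sesquilinear spectral ring zify.
Import Order.TTheory GRing.Theory Num.Theory Num.Def.
Local Open Scope ring_scope.
Set Implicit Arguments. Unset Strict Implicit.

Section Comb.
Variable C : numClosedFieldType.

Lemma partial_ge n (a : nat -> C) (S : 'I_n -> 'I_n -> C) k :
  (forall i j, (i <= j)%N -> (j < n)%N -> a i <= a j) ->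
  (forall i j, 0 <= S i j) -> (forall i, \sum_j S i j = 1) ->
  (forall j, \sum_i S i j = 1) -> (k <= n)%N ->
  \sum_(i < n) a i * (i < k)%:R <=
  \sum_(i < n) a i * \sum_(j < n) S i j * (j < k)%:R.
Proof.
move=> ha hS hr hc hk.
set w := fun i : 'I_n => \sum_(j < n) S i j * (j < k)%:R.
set m := a (minn k n.-1).
have sw : \sum_(i < n) w i = \sum_(i < n) (i < k)%:R :> C.
  rewrite /w exchange_big /=; apply: eq_bigr => j _.
  by rewrite -mulr_suml hc mul1r.
have wle : forall i, w i <= 1.
  move=> i; rewrite -(hr i) /w; apply: ler_sum => j _.
  by case: (j < k)%N; rewrite ?mulr1 ?mulr0.
have wge : forall i, 0 <= w i.
  move=> i; apply: sumr_ge0 => j _; apply: mulr_ge0 => //; exact: ler0n.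
have key : 0 <= \sum_(i < n) (a i - m) * (w i - (i < k)%:R).
  apply: sumr_ge0 => i _; case: (ltnP i k) => hik.
    apply: mulr_le0; last by rewrite subr_le0.
    have := ltn_ord i => hi.
    rewrite subr_le0; apply: ha; lia.
  rewrite /= subr0; apply: mulr_ge0 => //.
  have := ltn_ord i => hi.
  rewrite subr_ge0; apply: ha; lia.
rewrite -subr_ge0 -sumrB.
have -> : \sum_(i < n) (a i * w i - a i * (i < k)%:R) =
   \sum_(i < n) ((a i - m) * (w i - (i < k)%:R) + m * (w i - (i < k)%:R)).
  by apply: eq_bigr => i _; ring.
by rewrite big_split /= -mulr_sumr sumrB sw subrr mulr0 addr0.
Qed.
Lemma abel_le n (b D : nat -> C) :
  (forall j, (j.+1 < n)%N -> b j <= b j.+1) ->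
  (forall k, (k <= n)%N -> 0 <= \sum_(j < k) D j) ->
  \sum_(j < n) D j = 0 -> \sum_(j < n) b j * D j <= 0.
Proof.
move=> hb hT h0; case: n hb hT h0 => [|n] hb hT h0; first by rewrite big_ord0.
suff H : forall k, (k < n.+1)%N ->
   \sum_(j < k.+1) b j * D j <= b k * \sum_(j < k.+1) D j.
  by have := H n (ltnSn n); rewrite h0 mulr0.
elim=> [|k IH] hk; first by rewrite !big_ord1.
rewrite big_ord_recr /= [X in _ <= _ * X]big_ord_recr /= mulrDr.
apply: lerD => //.
apply: le_trans (IH (ltnW hk)) _.
apply: ler_wpM2r; first by apply: hT; apply: ltnW.
by apply: hb.
Qed.

Lemma sum_widen n k (F : nat -> C) : (k <= n)%N ->
  \sum_(j < k) F j = \sum_(j < n) F j * (j < k)%:R.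
Proof.
move=> hk; rewrite (big_ord_widen _ _ hk) big_mkcond /=.
by apply: eq_bigr => j _; case: (j < k)%N; rewrite ?mulr1 ?mulr0.
Qed.

Lemma ds_rearr n (a b : nat -> C) (S : 'I_n -> 'I_n -> C) :
  (forall i j, (i <= j)%N -> (j < n)%N -> a i <= a j) ->
  (forall i j, (i <= j)%N -> (j < n)%N -> b i <= b j) ->
  (forall i j, 0 <= S i j) -> (forall i, \sum_j S i j = 1) ->
  (forall j, \sum_i S i j = 1) ->
  \sum_(i < n) \sum_(j < n) a i * b j * S i j <= \sum_(i < n) a i * b i.
Proof.
move=> ha hb hS hr hc; case: n S ha hb hS hr hc => [|n] S ha hb hS hr hc.
  by rewrite !big_ord0.
set D := fun j : nat => \sum_(i < n.+1) a i * S i (inord j) - a j.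
have hD : forall k, (k <= n.+1)%N -> \sum_(j < k) D j =
    \sum_(i < n.+1) a i * \sum_(j < n.+1) S i j * (j < k)%:R
    - \sum_(i < n.+1) a i * (i < k)%:R.
  move=> k hk; rewrite (sum_widen _ hk) /D.
  under eq_bigr => j _ do rewrite mulrBl inord_val.
  rewrite sumrB; congr (_ - _).
  under eq_bigr => j _ do rewrite mulr_suml.
  rewrite exchange_big /=; apply: eq_bigr => i _.
  by rewrite mulr_sumr; apply: eq_bigr => j _; rewrite mulrA.
have := @abel_le n.+1 b D.
have -> : \sum_(j < n.+1) b j * D j =
   \sum_(i < n.+1) \sum_(j < n.+1) a i * b j * S i j - \sum_(i < n.+1) a i * b i.
  rewrite /D.
  under eq_bigr => j _ do rewrite mulrBr inord_val.
  rewrite sumrB; congr (_ - _); last by apply: eq_bigr => i _; rewrite mulrC.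
  rewrite exchange_big /=; apply: eq_bigr => j _; rewrite mulr_sumr.
  by apply: eq_bigr => i _; ring.
rewrite subr_le0; apply.
- by move=> j hj; apply: hb.
- move=> k hk; rewrite hD // subr_ge0; exact: partial_ge.
- rewrite hD //.
  under eq_bigr => i _ do under eq_bigr => j _ do rewrite ltn_ord mulr1.
  under [X in _ - X]eq_bigr => i _ do rewrite ltn_ord mulr1.
  under eq_bigr => i _ do rewrite hr mulr1.
  by rewrite subrr.
Qed.

Lemma ds_rearr_rev n (a b : nat -> C) (S : 'I_n -> 'I_n -> C) :
  (forall i j, (i <= j)%N -> (j < n)%N -> a i <= a j) ->
  (forall i j, (i <= j)%N -> (j < n)%N -> b i <= b j) ->
  (forall i j, 0 <= S i j) -> (forall i, \sum_j S i j = 1) ->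
  (forall j, \sum_i S i j = 1) ->
  \sum_(i < n) a i * b (n - 1 - i)%N <= \sum_(i < n) \sum_(j < n) a i * b j * S i j.
Proof.
move=> ha hb hS hr hc.
have rv : forall (F : 'I_n -> C), \sum_(j < n) F (rev_ord j) = \sum_(j < n) F j.
  by move=> F; rewrite [RHS](reindex_inj rev_ord_inj).
have := @ds_rearr n a (fun j => - b (n - 1 - j)%N) (fun i j => S i (rev_ord j)) ha.
have -> : \sum_(i < n) \sum_(j < n) a i * - b (n - 1 - j)%N * S i (rev_ord j) =
    - \sum_(i < n) \sum_(j < n) a i * b j * S i j.
  rewrite -sumrN; apply: eq_bigr => i _; rewrite -sumrN -rv; apply: eq_bigr => j _.
  have -> : (n - 1 - rev_ord j)%N = j by rewrite /= ; have := ltn_ord j; lia.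
  by rewrite rev_ordK mulrN mulNr.
have -> : \sum_(i < n) a i * - b (n - 1 - i)%N = - \sum_(i < n) a i * b (n - 1 - i)%N.
  by rewrite -sumrN; apply: eq_bigr => i _; ring.
rewrite lerN2; apply.
- move=> i j hij hj; rewrite lerN2; apply: hb; lia.
- by move=> i j.
- by move=> i; rewrite (rv (S i)).
- by move=> j; apply: hc.
Qed.
End Comb.

Section M.
Variable C : numClosedFieldType.
Local Open Scope sesquilinear_scope.

Lemma herm_spec n (A : 'M[C]_n) : A \is hermsymmx ->
  A = (spectralmx A)^t* *m diag_mx (spectral_diag A) *m spectralmx A.
Proof.
move=> hA; have /orthomx_spectralP {1}-> := hermitian_normalmx hA.
by rewrite invmx_unitary // spectral_unitarymx.
Qed.

Lemma spec_real n (A : 'M[C]_n) : A \is hermsymmx -> forall i, spectral_diag A 0 i \is Num.real.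
Proof. by move=> /hermitian_spectral_diag_real /mxOverP h i; apply: h. Qed.

Lemma eigs_size n (A : 'M[C]_n) : size (eigs A) = n.
Proof. by rewrite /eigs size_sort size_map size_enum_ord. Qed.

Lemma eigs_sorted n (A : 'M[C]_n) : A \is hermsymmx ->
  forall i j, (i <= j)%N -> (j < n)%N -> nth 0 (eigs A) i <= nth 0 (eigs A) j.
Proof.
move=> hA i j hij hj.
have ss : sorted <=%R (eigs A).
  rewrite /eigs; apply: (@sort_sorted_in _ Num.real).
    by move=> x y hx hy; apply: real_leVge.
  by apply/allP => x /mapP [k _ ->]; apply: spec_real.
apply: (sorted_leq_nth le_trans lexx) => //; rewrite inE eigs_size //.
exact: leq_ltn_trans hij hj.
Qed.

Lemma eigs_perm n (A : 'M[C]_n) :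
  exists s : 'S_n, forall i : 'I_n, nth 0 (eigs A) i = spectral_diag A 0 (s i).
Proof.
have : perm_eq (eigs A) [tuple spectral_diag A 0 i | i < n].
  by rewrite /eigs perm_sort /= perm_refl.
case/tuple_permP => s hs; exists s => i.
by rewrite hs -tnth_nth !tnth_mktuple.
Qed.

Lemma tr_diag n (d1 d2 : 'rV[C]_n) (V : 'M[C]_n) :
  \tr (diag_mx d1 *m V *m diag_mx d2 *m V^t*) =
  \sum_a \sum_b d1 0 a * d2 0 b * (V a b * (V a b)^*).
Proof.
rewrite mul_diag_mx mul_mx_diag /mxtrace; apply: eq_bigr => a _; rewrite !mxE.
by apply: eq_bigr => b _; rewrite !mxE; ring.
Qed.

Lemma tr_conj n (rho M W : 'M[C]_n) : rho \is hermsymmx -> M \is hermsymmx ->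
  \tr (rho *m (W *m M *m W^t*)) =
  \tr (diag_mx (spectral_diag rho) *m (spectralmx rho *m W *m (spectralmx M)^t*)
       *m diag_mx (spectral_diag M) *m (spectralmx rho *m W *m (spectralmx M)^t*)^t*).
Proof.
move=> hr hM; rewrite {1}(herm_spec hr) {1}(herm_spec hM).
rewrite !trmx_mul !map_mxM trmxCK.
rewrite -!mulmxA mxtrace_mulC !mulmxA; done.
Qed.

Lemma unit_rows n (V : 'M[C]_n) : V \is unitarymx ->
  forall a, \sum_b V a b * (V a b)^* = 1.
Proof.
move=> /unitarymxP /matrixP hV a; have := hV a a.
by rewrite !mxE eqxx mulr1n => <-; apply: eq_bigr => b _; rewrite !mxE.
Qed.

Lemma unit_cols n (V : 'M[C]_n) : V \is unitarymx ->
  forall b, \sum_a V a b * (V a b)^* = 1.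
Proof.
rewrite -trmxC_unitary => /unitarymxP /matrixP hV b; have := hV b b.
rewrite !mxE eqxx mulr1n => <-; apply: eq_bigr => a _; rewrite !mxE conjCK.
by rewrite mulrC.
Qed.

Lemma tr_formula n (rho M W : 'M[C]_n) (sr sm : 'S_n) :
  rho \is hermsymmx -> M \is hermsymmx ->
  (forall i : 'I_n, nth 0 (eigs rho) i = spectral_diag rho 0 (sr i)) ->
  (forall i : 'I_n, nth 0 (eigs M) i = spectral_diag M 0 (sm i)) ->
  let V := spectralmx rho *m W *m (spectralmx M)^t* in
  \tr (rho *m (W *m M *m W^t*)) =
  \sum_(i < n) \sum_(j < n) nth 0 (eigs M) i * nth 0 (eigs rho) j *
       (V (sr j) (sm i) * (V (sr j) (sm i))^*).
Proof.
move=> hr hM hsr hsm V; rewrite tr_conj // tr_diag exchange_big /=.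
rewrite (reindex_inj (@perm_inj _ sm)) /=; apply: eq_bigr => i _.
rewrite (reindex_inj (@perm_inj _ sr)) /=; apply: eq_bigr => j _.
by rewrite hsr hsm /V; ring.
Qed.

Lemma kf_bounds n (rho M W : 'M[C]_n) :
  rho \is hermsymmx -> M \is hermsymmx -> W \is unitarymx ->
  \sum_(i < n) nth 0 (eigs M) i * nth 0 (eigs rho) (n - 1 - i)%N
    <= \tr (rho *m (W *m M *m W^t*)) /\
  \tr (rho *m (W *m M *m W^t*)) <= \sum_(i < n) nth 0 (eigs M) i * nth 0 (eigs rho) i.
Proof.
move=> hr hM hW.
have [sr hsr] := eigs_perm rho; have [sm hsm] := eigs_perm M.
rewrite (tr_formula W hr hM hsr hsm) /=.
set V := spectralmx rho *m W *m (spectralmx M)^t*.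
have hV : V \is unitarymx.
  by rewrite /V !mul_unitarymx // ?trmxC_unitary spectral_unitarymx.
set T := fun i j => V (sr j) (sm i) * (V (sr j) (sm i))^*.
have T0 : forall i j, 0 <= T i j by move=> i j; apply: mul_conjC_ge0.
have Tr : forall i, \sum_j T i j = 1.
  move=> i; rewrite /T -(unit_cols hV (sm i)).
  by rewrite [RHS](reindex_inj (@perm_inj _ sr)).
have Tc : forall j, \sum_i T i j = 1.
  move=> j; rewrite /T -(unit_rows hV (sr j)).
  by rewrite [RHS](reindex_inj (@perm_inj _ sm)).
split.
- exact: ds_rearr_rev (eigs_sorted hM) (eigs_sorted hr) T0 Tr Tc.
- exact: ds_rearr (eigs_sorted hM) (eigs_sorted hr) T0 Tr Tc.
Qed.

Lemma perm_mx_unitary n (s : 'S_n) : (perm_mx s : 'M[C]_n) \is unitarymx.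
Proof.
apply/unitarymxP; rewrite tr_perm_mx.
have -> : map_mx conjC (perm_mx s^-1) = perm_mx s^-1 :> 'M[C]_n.
  by apply/matrixP => i j; rewrite !mxE rmorph_nat.
by rewrite -perm_mxM mulgV perm_mx1.
Qed.

Lemma achieve n (rho M : 'M[C]_n) (g : 'S_n) :
  rho \is hermsymmx -> M \is hermsymmx ->
  exists2 W, W \is unitarymx &
    \tr (rho *m (W *m M *m W^t*)) =
    \sum_(j < n) nth 0 (eigs M) (g j) * nth 0 (eigs rho) j.
Proof.
move=> hr hM.
have [sr hsr] := eigs_perm rho; have [sm hsm] := eigs_perm M.
set Pi := perm_mx (sr^-1 * g * sm) : 'M[C]_n.
set W := (spectralmx rho)^t* *m Pi *m spectralmx M.
have hP := spectral_unitarymx rho; have hQ := spectral_unitarymx M.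
exists W.
  by rewrite /W !mul_unitarymx ?trmxC_unitary ?perm_mx_unitary.
rewrite (tr_formula W hr hM hsr hsm) /=.
have -> : spectralmx rho *m W *m (spectralmx M)^t* = Pi.
  rewrite /W !mulmxA (unitarymxP hP) mul1mx -mulmxA (unitarymxP hQ).
  by rewrite mulmx1.
rewrite exchange_big /=; apply: eq_bigr => j _.
rewrite (bigD1 (g j)) //= big1 ?addr0.
  by rewrite /Pi !mxE !permM permK eqxx mulr1n rmorph1 !mulr1.
move=> i hi; rewrite /Pi !mxE !permM permK (inj_eq perm_inj) eq_sym (negbTE hi).
by rewrite mulr0n mul0r mulr0.
Qed.

Lemma sum_tens m n (F : 'I_(m * n) -> C) :
  \sum_k F k = \sum_(i < m) \sum_(j < n) F (mxtens_index (i, j)).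
Proof.
rewrite pair_big /= (reindex (@mxtens_index m n)) /=.
  by apply: eq_bigr => -[i j].
by exists (@mxtens_unindex m n) => k _; [rewrite mxtens_indexK | rewrite mxtens_unindexK].
Qed.

Lemma sum_delta n (F : 'I_n -> C) b :
  \sum_(b' < n) F b' * (b' == b)%:R = F b.
Proof.
rewrite (bigD1 b) //= eqxx mulr1 big1 ?addr0 // => c /negbTE ->.
by rewrite mulr0.
Qed.

Definition ptr2 m n (R : 'M[C]_(m * n)) : 'M[C]_m :=
  \matrix_(i, j) \sum_(b < n) R (mxtens_index (i, b)) (mxtens_index (j, b)).
Definition ptr1 m n (R : 'M[C]_(m * n)) : 'M[C]_n :=
  \matrix_(i, j) \sum_(a < m) R (mxtens_index (a, i)) (mxtens_index (a, j)).

Lemma tr_tens_l m n (R : 'M[C]_(m * n)) (X : 'M[C]_m) :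
  \tr (R *m (X *t (1%:M : 'M_n))) = \tr (ptr2 R *m X).
Proof.
rewrite /mxtrace sum_tens; apply: eq_bigr => i _.
under eq_bigr => b _ do rewrite !mxE sum_tens.
rewrite !mxE exchange_big /=; apply: eq_bigr => i' _.
rewrite !mxE mulr_suml; apply: eq_bigr => b _.
rewrite -[RHS](sum_delta (fun b' => R (mxtens_index (i, b)) (mxtens_index (i', b')) * X i' i) b).
by apply: eq_bigr => b' _; rewrite tensmxE !mxE mulrA.
Qed.

Lemma tr_tens_r m n (R : 'M[C]_(m * n)) (Y : 'M[C]_n) :
  \tr (R *m ((1%:M : 'M_m) *t Y)) = \tr (ptr1 R *m Y).
Proof.
rewrite /mxtrace sum_tens exchange_big /=; apply: eq_bigr => b _.
have E : forall a : 'I_m, (R *m (1%:M *t Y)) (mxtens_index (a, b)) (mxtens_index (a, b))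
   = \sum_(b' < n) R (mxtens_index (a, b)) (mxtens_index (a, b')) * Y b' b.
  move=> a; rewrite !mxE sum_tens exchange_big /=; apply: eq_bigr => b' _.
  rewrite -[RHS](sum_delta (fun a' => R (mxtens_index (a, b)) (mxtens_index (a', b')) * Y b' b) a).
  by apply: eq_bigr => a' _; rewrite tensmxE !mxE; ring.
under eq_bigr => a _ do rewrite E.
rewrite exchange_big /= !mxE; apply: eq_bigr => b' _.
by rewrite !mxE mulr_suml.
Qed.

Lemma tens11 m n : (1%:M : 'M[C]_m) *t (1%:M : 'M[C]_n) = 1%:M.
Proof.
apply/matrixP => k l.
case: (mxtens_indexP k) => a b; case: (mxtens_indexP l) => a' b'.
rewrite tensmxE !mxE (inj_eq (can_inj (@mxtens_indexK m n))) xpair_eqE.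
by case: (a == a'); case: (b == b'); rewrite ?mulr1 ?mulr0.
Qed.

Lemma trA (rho : 'M[C]_(2 * 2 * 2)) X : \tr (rho *m on1 X) = \tr (ptrA rho *m X).
Proof.
rewrite /on1 /I2 tr_tens_l tr_tens_l; congr (\tr (_ *m _)).
by apply/matrixP => i j; rewrite !mxE; apply: eq_bigr => b _; rewrite !mxE.
Qed.

Lemma trB (rho : 'M[C]_(2 * 2 * 2)) X : \tr (rho *m on2 X) = \tr (ptrB rho *m X).
Proof.
rewrite /on2 /I2 tr_tens_l tr_tens_r; congr (\tr (_ *m _)).
apply/matrixP => i j; rewrite !mxE.
by apply: eq_bigr => a _; rewrite !mxE.
Qed.

Lemma trC (rho : 'M[C]_(2 * 2 * 2)) X : \tr (rho *m on3 X) = \tr (ptrC rho *m X).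
Proof.
rewrite /on3 /I2 tens11 tr_tens_r; congr (\tr (_ *m _)).
by apply/matrixP => i j; rewrite !mxE sum_tens.
Qed.

Lemma hermE n (A : 'M[C]_n) : (A \is hermsymmx) = (A^t* == A).
Proof.
by apply/is_hermitianmxP/eqP; rewrite expr0 scale1r; [exact: esym | exact: esym].
Qed.

Lemma hermP n (A : 'M[C]_n) :
  (forall i j, A i j = (A j i)^*) -> A \is hermsymmx.
Proof. by move=> h; rewrite hermE; apply/eqP/matrixP => i j; rewrite !mxE -h. Qed.

Lemma hermP' n (A : 'M[C]_n) : A \is hermsymmx -> forall i j, A i j = (A j i)^*.
Proof. by rewrite hermE => /eqP/matrixP h i j; rewrite -h !mxE. Qed.

Lemma adjT m n p q (A : 'M[C]_(m, n)) (B : 'M[C]_(p, q)) : (A *t B)^t* = A^t* *t B^t*.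
Proof. by rewrite trmx_tens map_mxT. Qed.

Lemma adjD m n (A B : 'M[C]_(m, n)) : (A + B)^t* = A^t* + B^t*.
Proof. by rewrite linearD /= map_mxD. Qed.

Lemma adj1 n : (1%:M : 'M[C]_n)^t* = 1%:M.
Proof. by rewrite trmx1 map_mx1. Qed.

Lemma tens_unitary m n (A : 'M[C]_m) (B : 'M[C]_n) :
  A \is unitarymx -> B \is unitarymx -> A *t B \is unitarymx.
Proof.
move=> /unitarymxP hA /unitarymxP hB; apply/unitarymxP.
by rewrite adjT tensmx_mul hA hB tens11.
Qed.

Lemma herm_ptrA (rho : 'M[C]_(2 * 2 * 2)) : rho \is hermsymmx -> ptrA rho \is hermsymmx.
Proof.
move=> /hermP' h; apply: hermP => i j; rewrite !mxE rmorph_sum; apply: eq_bigr => b _.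
by rewrite rmorph_sum; apply: eq_bigr => c _; rewrite h.
Qed.
Lemma herm_ptrB (rho : 'M[C]_(2 * 2 * 2)) : rho \is hermsymmx -> ptrB rho \is hermsymmx.
Proof.
move=> /hermP' h; apply: hermP => i j; rewrite !mxE rmorph_sum; apply: eq_bigr => b _.
by rewrite rmorph_sum; apply: eq_bigr => c _; rewrite h.
Qed.
Lemma herm_ptrC (rho : 'M[C]_(2 * 2 * 2)) : rho \is hermsymmx -> ptrC rho \is hermsymmx.
Proof.
move=> /hermP' h; apply: hermP => i j; rewrite !mxE rmorph_sum; apply: eq_bigr => b _.
by rewrite rmorph_sum; apply: eq_bigr => c _; rewrite h.
Qed.

Lemma herm_on1 (h : 'M[C]_2) : h \is hermsymmx -> on1 h \is hermsymmx.
Proof. by rewrite !hermE /on1 /I2 !adjT adj1 => /eqP ->. Qed.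
Lemma herm_on2 (h : 'M[C]_2) : h \is hermsymmx -> on2 h \is hermsymmx.
Proof. by rewrite !hermE /on2 /I2 !adjT adj1 => /eqP ->. Qed.
Lemma herm_on3 (h : 'M[C]_2) : h \is hermsymmx -> on3 h \is hermsymmx.
Proof. by rewrite !hermE /on3 /I2 !adjT adj1 => /eqP ->. Qed.

Lemma hermD n (A B : 'M[C]_n) : A \is hermsymmx -> B \is hermsymmx -> A + B \is hermsymmx.
Proof. by rewrite !hermE adjD => /eqP -> /eqP ->. Qed.

Lemma hermZ n (E : C) (A : 'M[C]_n) : E \is Num.real -> A \is hermsymmx -> E *: A \is hermsymmx.
Proof.
move=> hE /hermP' h; apply: hermP => i j; rewrite !mxE rmorphM /= (conj_Creal hE) -h.
by [].
Qed.

Lemma herm_sx : sigma_x C \is hermsymmx.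
Proof.
by apply: hermP => -[[|[|?]] ?] -[[|[|?]] ?] //; rewrite !mxE /= ?rmorph0 ?rmorph1.
Qed.
Lemma herm_sy : sigma_y C \is hermsymmx.
Proof.
apply: hermP => -[[|[|?]] ?] -[[|[|?]] ?] //; rewrite !mxE /= ?rmorph0 //.
  by rewrite conjCi.
by rewrite rmorphN /= conjCi opprK.
Qed.
Lemma herm_sz : sigma_z C \is hermsymmx.
Proof.
by apply: hermP => -[[|[|?]] ?] -[[|[|?]] ?] //; rewrite !mxE /= ?rmorph0 ?rmorph1 ?rmorphN1.
Qed.

Lemma cap_bound n (rho M W1 W2 : 'M[C]_n) :
  rho \is hermsymmx -> M \is hermsymmx -> W1 \is unitarymx -> W2 \is unitarymx ->
  \tr (rho *m (W1 *m M *m W1^t*)) - \tr (rho *m (W2 *m M *m W2^t*)) <= capacity rho M.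
Proof.
move=> hr hM h1 h2; rewrite /capacity.
under eq_bigr => i _ do rewrite mulrBr.
rewrite sumrB; apply: lerB.
  exact: (kf_bounds hr hM h1).2.
exact: (kf_bounds hr hM h2).1.
Qed.

Lemma cap_achieve n (rho M : 'M[C]_n) :
  rho \is hermsymmx -> M \is hermsymmx ->
  exists W1 W2, [/\ W1 \is unitarymx, W2 \is unitarymx &
   capacity rho M =
   \tr (rho *m (W1 *m M *m W1^t*)) - \tr (rho *m (W2 *m M *m W2^t*))].
Proof.
move=> hr hM.
have [W1 h1 e1] := achieve 1 hr hM.
have [W2 h2 e2] := achieve (perm (@rev_ord_inj n)) hr hM.
exists W1, W2; split => //; rewrite e1 e2 /capacity.
under eq_bigr => i _ do rewrite mulrBr.
rewrite sumrB; congr (_ - _).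
  by apply: eq_bigr => j _; rewrite perm1.
rewrite [RHS](reindex_inj rev_ord_inj) /=; apply: eq_bigr => j _.
rewrite permE rev_ordK; congr (_ * nth 0 _ _).
by rewrite /=; have := ltn_ord j; lia.
Qed.

Lemma tensZl m n p q (a : C) (A : 'M[C]_(m, n)) (B : 'M[C]_(p, q)) :
  (a *: A) *t B = a *: (A *t B).
Proof. by apply/matrixP => i j; rewrite !mxE mulrA. Qed.
Lemma tensZr m n p q (a : C) (A : 'M[C]_(m, n)) (B : 'M[C]_(p, q)) :
  A *t (a *: B) = a *: (A *t B).
Proof. by apply/matrixP => i j; rewrite !mxE mulrCA. Qed.
Lemma tensDl m n p q (A A' : 'M[C]_(m, n)) (B : 'M[C]_(p, q)) :
  (A + A') *t B = A *t B + A' *t B.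
Proof. by apply/matrixP => i j; rewrite !mxE mulrDl. Qed.
Lemma tensDr m n p q (A : 'M[C]_(m, n)) (B B' : 'M[C]_(p, q)) :
  A *t (B + B') = A *t B + A *t B'.
Proof. by apply/matrixP => i j; rewrite !mxE mulrDr. Qed.

Lemma onZ1 a (s : 'M[C]_2) : on1 (a *: s) = a *: on1 s.
Proof. by rewrite /on1 !tensZl. Qed.
Lemma onZ2 a (s : 'M[C]_2) : on2 (a *: s) = a *: on2 s.
Proof. by rewrite /on2 tensZr tensZl. Qed.
Lemma onZ3 a (s : 'M[C]_2) : on3 (a *: s) = a *: on3 s.
Proof. by rewrite /on3 tensZr. Qed.
Lemma onD1 (s t : 'M[C]_2) : on1 (s + t) = on1 s + on1 t.
Proof. by rewrite /on1 !tensDl. Qed.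
Lemma onD2 (s t : 'M[C]_2) : on2 (s + t) = on2 s + on2 t.
Proof. by rewrite /on2 tensDr tensDl. Qed.
Lemma onD3 (s t : 'M[C]_2) : on3 (s + t) = on3 s + on3 t.
Proof. by rewrite /on3 tensDr. Qed.

Lemma conj_on (W1 W2 W3 h : 'M[C]_2) :
  W1 \is unitarymx -> W2 \is unitarymx -> W3 \is unitarymx ->
  (W1 *t W2 *t W3) *m (on1 h + on2 h + on3 h) *m (W1 *t W2 *t W3)^t* =
  on1 (W1 *m h *m W1^t*) + on2 (W2 *m h *m W2^t*) + on3 (W3 *m h *m W3^t*).
Proof.
move=> /unitarymxP h1 /unitarymxP h2 /unitarymxP h3.
rewrite !adjT !mulmxDr !mulmxDl /on1 /on2 /on3 /I2 !tensmx_mul !mulmx1.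
by rewrite h1 h2 h3.
Qed.
End M.

Theorem theorem3 (C : numClosedFieldType) (E : C)
    (H0 : 'M[C]_(2 * 2 * 2)) (h : 'M[C]_2) (Hint rho : 'M[C]_(2 * 2 * 2)) :
  0 < E ->
  (H0 = H0a E /\ h = ha E) \/ (H0 = H0b E /\ h = hb E) ->
  Hint \is hermsymmx ->
  density rho ->
  capacity rho H0 <= capacity rho (H0 + Hint) ->
  capacity (ptrA rho) h + capacity (ptrB rho) h + capacity (ptrC rho) h
    <= capacity rho (H0 + Hint).
Proof.
move=> hE hcase _ [[hr _] _] hcap.
have Er : E \is Num.real by apply: gtr0_real.
have [hh eH0] : h \is hermsymmx /\ H0 = on1 h + on2 h + on3 h.
  case: hcase => -[-> ->]; split.
  - by rewrite /ha; apply: hermZ => //; apply: herm_sz.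
  - by rewrite /H0a /ha !onZ1 !onZ2 !onZ3 !scalerDr.
  - by rewrite /hb; apply: hermZ => //; apply: hermD; [apply: herm_sx | apply: herm_sy].
  - by rewrite /H0b /hb !onZ1 !onZ2 !onZ3 !onD1 !onD2 !onD3 !scalerDr.
have hH0 : H0 \is hermsymmx.
  by rewrite eH0; apply: hermD; [apply: hermD|]; [apply: herm_on1 | apply: herm_on2 | apply: herm_on3].
apply: le_trans hcap.
have [X1 [Y1 [hX1 hY1 eA]]] := cap_achieve (herm_ptrA hr) hh.
have [X2 [Y2 [hX2 hY2 eB]]] := cap_achieve (herm_ptrB hr) hh.
have [X3 [Y3 [hX3 hY3 eC]]] := cap_achieve (herm_ptrC hr) hh.
have := cap_bound hr hH0 (tens_unitary (tens_unitary hX1 hX2) hX3)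
                        (tens_unitary (tens_unitary hY1 hY2) hY3).
rewrite eH0 !conj_on // !mulmxDr !mxtraceD !trA !trB !trC eA eB eC.
suff -> : forall a1 a2 a3 b1 b2 b3 : C,
   a1 - b1 + (a2 - b2) + (a3 - b3) = a1 + a2 + a3 - (b1 + b2 + b3) by [].
by move=> *; ring.
Qed.
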